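(* If $K$ is a degenerate CMI, i.e. $K=(\cdot,\langle\ \rangle)$, then $(\cdot,\langle\ \rangle)$ is the only sub-CMI of $K$.
   Context: Setting: $X_1,\dots,X_n$ jointly distributed discrete random variables with $H(X_i)<\infty$; distribution unspecified. $X_\alpha=(X_i,i\in\alpha)$, $X_\emptyset$ constant. A CMI is $K=(C,\langle Q_1,\dots,Q_k\rangle)$, $k\ge0$, $C\subseteq\{1,\dots,n\}$, $\langle\cdot\rangle$ an unordered multiset of subsets; valid (for a given distribution) if $\sum_iH(X_{Q_i}|X_C)-H(X_{Q_1},\dots,X_{Q_k}|X_C)=0$. Empty members may be deleted. Degenerate = valid for every distribution; all degenerate CMIs are identified and written $(\cdot,\langle\ \rangle)$. $\mathrm{pur}(K)=(C,\langle Q_i\setminus C:Q_i\setminus C\ne\emptyset\rangle)$. For pure $K$: $\mathbb I_K$ = indices lying in at least two members of the collection if $k\ge2$, else $\emptyset$; $P_1,\dots,P_t$ the nonempty sets among $Q_i\setminus\mathbb I_K$; $\mathrm{can}(K)=(\cdot,\langle\ \rangle)$ if $k\le1$, $(C,\langle\mathbb I_K,\mathbb I_K\rangle)$ if $k\ge2,\mathbb I_K\ne\emptyset,t\le1$, $(C,\langle P_1..P_t\rangle)$ if $k\ge2,\mathbb I_K=\emptyset$, $(C,\langle\mathbb I_K,\mathbb I_K,P_1..P_t\rangle)$ if $k\ge2,\mathbb I_K\ne\emptyset,t\ge2$. For general $K$, $\mathbb I_K$ is the repeated-index set of $\mathrm{pur}(K)$ and $\mathrm{can}(\mathrm{pur}(K))$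 is written $(C,\langle\mathbb I_K,\mathbb I_K,P_i,1\le i\le t\rangle)$ (copies of $\mathbb I_K$ omitted if empty; for degenerate $K$ this means $\mathbb I_K=\emptyset$, $t\in\{0,1\}$, $C$ arbitrary). $P=\bigcup_iP_i$, $S=C\cup P$. $R_K^{K'}$: with $\mathrm{can}(\mathrm{pur}(K'))=(C',\langle\mathbb I_{K'},\mathbb I_{K'},P'_j,1\le j\le s\rangle)$, $D=\mathbb I_{K'}\setminus\mathbb I_K$ and $T_1,\dots,T_u$ the nonempty sets among $P'_j\setminus\mathbb I_K$: $R_K^{K'}=(\cdot,\langle\ \rangle)$ if $D=\emptyset,u\le1$; $(C'\setminus\mathbb I_K,\langle T_1..T_u\rangle)$ if $D=\emptyset,u\ge2$; $(C'\setminus\mathbb I_K,\langle D,D\rangle)$ if $D\ne\emptyset,u\le1$; $(C'\setminus\mathbb I_K,\langle D,D,T_1..T_u\rangle)$ if $D\ne\emptyset,u\ge2$. Sub-CMI: with $K''=R_K^{K'}$, $\mathrm{can}(\mathrm{pur}(K''))=(C'',\langle\mathbb I_{K''},\mathbb I_{K''},P''_j,1\le j\le r\rangle)$, $P''=\bigcup_jP''_j$, $K'$ is a sub-CMI of $K$ if: (i) $K'=(\cdot,\langle\ \rangle)$; or (ii) $\mathrm{can}(\mathrm{pur}(K''))=(\cdot,\langle\ \rangle)$ and $C\subseteq C'$; or (iii) $\mathrm{can}(\mathrm{pur}(K''))\ne(\cdot,\langle\ \rangle)$, $\mathbb I_{K''}=\emptyset$, $P''\subseteq P$, $C\subseteq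 C''\subseteq S\setminus P''$, and whenever $m_1\in P''_{j_1}$, $m_2\in P''_{j_2}$ with $j_1\ne j_2$, then $m_1\in P_{i_1}$, $m_2\in P_{i_2}$ with $i_1\ne i_2$. *)

(* Defs.v *)
From HB Require Import structures.
From mathcomp Require Import all_boot all_order all_algebra.
From mathcomp Require Import boolp classical_sets reals ereal esum exp.
From mathcomp Require Import Rstruct.
Set Implicit Arguments. Unset Strict Implicit. Unset Printing Implicit Defensive.
Import Order.TTheory GRing.Theory Num.Theory.
Local Open Scope ring_scope.
Local Notation set0 := finset.set0.

(* Semantics: jointly distributed discrete random variables X_1..X_n.        *)
(* Indices are 'I_n.  Every countable alphabet embeds into nat, and entropy   *)
(* only depends on the joint law, so a joint distribution is a probability   *)
(* mass function on outcomes x : {ffun 'I_n -> nat} (x i = value of X_i).    *)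

Definition RR := Rdefinitions.R.

Definition outcome (n : nat) := {ffun 'I_n -> nat}.

(* the value of X_A = (X_i, i in A), padded with 0 outside A *)
Definition restr n (A : {set 'I_n}) (x : outcome n) : outcome n :=
  [ffun i => if i \in A then x i else 0%N].

Definition is_pmf n (p : outcome n -> RR) : Prop :=
  (forall x, 0 <= p x) /\ (\esum_(x in [set: outcome n]) (p x)%:E = 1)%E.

Definition marg n (p : outcome n -> RR) (A : {set 'I_n}) (y : outcome n) : RR :=
  fine (\esum_(x in [set x | restr A x = y]) (p x)%:E).

Definition entropy n (p : outcome n -> RR) (A : {set 'I_n}) : \bar RR :=
  \esum_(y in [set: outcome n]) (- (marg p A y * ln (marg p A y)))%:E.

Definition admissible n (p : outcome n -> RR) : Prop :=
  is_pmf p /\ forall i : 'I_n, (entropy p [set i] < +oo)%E.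

(* conditional entropy H(X_A | X_C) = H(X_{A u C}) - H(X_C) (all finite for
   admissible p, so computed through fine) *)
Definition centropy n (p : outcome n -> RR) (A C : {set 'I_n}) : RR :=
  fine (entropy p (A :|: C)) - fine (entropy p C).

(* CMIs: K = (C, <Q_1,...,Q_k>), the multiset represented by a sequence.      *)

Definition CMI (n : nat) := ({set 'I_n} * seq {set 'I_n})%type.

Definition valid n (p : outcome n -> RR) (K : CMI n) : Prop :=
  \sum_(Q <- K.2) centropy p Q K.1
    - centropy p (\bigcup_(Q <- K.2) Q) K.1 = 0.

Definition degenerate n (K : CMI n) : Prop :=
  forall p : outcome n -> RR, admissible p -> valid p K.

(* a representative of the degenerate CMI ( . , < > ) *)
Definition degCMI n : CMI n := (set0, [::]).

Definition pur n (K : CMI n) : CMI n :=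
  (K.1, [seq Q :\: K.1 | Q <- K.2 & Q :\: K.1 != set0]).

Definition rep n (Qs : seq {set 'I_n}) : {set 'I_n} :=
  if (2 <= size Qs)%N then finset (fun i : 'I_n => (2 <= count (fun Q : {set 'I_n} => i \in Q) Qs)%N)
  else set0.

Definition Pseq n (I : {set 'I_n}) (Qs : seq {set 'I_n}) : seq {set 'I_n} :=
  [seq Q :\: I | Q <- Qs & Q :\: I != set0].

Definition can n (K : CMI n) : CMI n :=
  let I := rep K.2 in
  let Ps := Pseq I K.2 in
  if (size K.2 <= 1)%N then degCMI n
  else if I == set0 then (K.1, Ps)
  else if (size Ps <= 1)%N then (K.1, [:: I; I])
  else (K.1, I :: I :: Ps).

(* the data of can(pur(K)) written as (C, <I_K, I_K, P_i, 1 <= i <= t>):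
   I_K, the list of the P_i, and C *)
Definition canI n (K : CMI n) : {set 'I_n} := rep (pur K).2.

Definition canP n (K : CMI n) : seq {set 'I_n} :=
  let Qs := (pur K).2 in
  let I := rep Qs in
  let Ps := Pseq I Qs in
  if [&& (2 <= size Qs)%N, I != set0 & (size Ps <= 1)%N] then [::] else Ps.

Definition canC n (K : CMI n) : {set 'I_n} := (pur K).1.

Definition RKK n (K K' : CMI n) : CMI n :=
  let IK := canI K in
  let D := canI K' :\: IK in
  let Ts := [seq P :\: IK | P <- canP K' & P :\: IK != set0] in
  let C := canC K' :\: IK in
  if D == set0 then
    (if (size Ts <= 1)%N then degCMI n else (C, Ts))
  else if (size Ts <= 1)%N then (C, [:: D; D])
  else (C, D :: D :: Ts).

Definition bigU n (s : seq {set 'I_n}) : {set 'I_n} := \bigcup_(X <- s) X.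

Definition subCMI n (K K' : CMI n) : Prop :=
  let K'' := RKK K K' in
  let C := canC K in
  let Ps := canP K in
  let P := bigU Ps in
  let S := C :|: P in
  let C'' := canC K'' in
  let P''s := canP K'' in
  let P'' := bigU P''s in
  degenerate K'
  \/ (degenerate (can (pur K'')) /\ C \subset canC K')
  \/ (~ degenerate (can (pur K'')) /\ canI K'' = set0 /\
        P'' \subset P /\ C \subset C'' /\ C'' \subset S :\: P'' /\
        forall (j1 j2 : nat) (m1 m2 : 'I_n),
          (j1 < size P''s)%N -> (j2 < size P''s)%N -> j1 <> j2 ->
          m1 \in nth set0 P''s j1 -> m2 \in nth set0 P''s j2 ->
          exists i1 i2 : nat, [/\ (i1 < size Ps)%N, (i2 < size Ps)%N, i1 <> i2,
            m1 \in nth set0 Ps i1 & m2 \in nth set0 Ps i2]).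

(* Main.v *)
Require Import Defs.
From mathcomp Require Import all_boot.
From HB Require Import structures.
From mathcomp Require Import all_order all_algebra.
From mathcomp Require Import boolp classical_sets reals ereal esum exp.
From mathcomp Require Import Rstruct.
From mathcomp Require Import ring lra.
Set Implicit Arguments. Unset Strict Implicit. Unset Printing Implicit Defensive.
Import Order.TTheory GRing.Theory Num.Theory.

Module SemM.
Local Open Scope ring_scope.
Local Notation set0 := finset.set0.

Lemma esum_pt (T : choiceType) (a : T) (c : \bar RR) : (0 <= c)%E ->
  \esum_(x in [set: T]) (if x == a then c else 0%E) = c.
Proof.
move=> c0; rewrite -[RHS](@esum_set1 RR T a (fun _ => c)) //.
rewrite (esum_mkcond [set a]); apply: eq_esum => x _.
by rewrite in_set1.
Qed.

Lemma esum2 (T : choiceType) (S : set T) (f : T -> \bar RR) a b : a != b ->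
  (forall x, (0 <= f x)%E) -> (forall x, x != a -> x != b -> f x = 0%E) ->
  \esum_(x in S) f x = ((if a \in S then f a else 0) + (if b \in S then f b else 0))%E.
Proof.
move=> ab f0 fz; rewrite esum_mkcond.
rewrite (eq_esum (b := fun x => ((if x == a then (if a \in S then f a else 0) else 0)
   + (if x == b then (if b \in S then f b else 0) else 0))%E)); last first.
  move=> x _; have [->|xa] := eqVneq x a.
    by rewrite (negbTE ab) adde0.
  have [->|xb] := eqVneq x b; first by rewrite add0e.
  by rewrite fz // add0e; case: ifP.
rewrite esumD; last 2 first.
- by move=> x _; case: ifP => // _; case: ifP.
- by move=> x _; case: ifP => // _; case: ifP.
by rewrite !esum_pt //; case: ifP.
Qed.

Section Dist.
Variables (n : nat) (m1 m2 : 'I_n).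

Definition x0 : outcome n := [ffun _ => 0%N].
Definition x1 : outcome n := [ffun i => if (i == m1) || (i == m2) then 1%N else 0%N].
Definition hit (A : {set 'I_n}) := (m1 \in A) || (m2 \in A).
Definition pp (x : outcome n) : RR := if (x == x0) || (x == x1) then 2^-1 else 0.

Lemma x01 : x0 != x1.
Proof. by apply/eqP => /(congr1 (fun f : outcome n => f m1)); rewrite !ffunE eqxx. Qed.

Lemma restr_x0 A : restr A x0 = x0.
Proof. by apply/ffunP => i; rewrite !ffunE; case: ifP. Qed.

Lemma restr_x1 A : (restr A x1 == x0) = ~~ hit A.
Proof.
rewrite /hit; apply/eqP/idP.
  move=> h; apply/negP => /orP[] hm.
    by move/(congr1 (fun f : outcome n => f m1)): h; rewrite !ffunE hm eqxx.
  by move/(congr1 (fun f : outcome n => f m2)): h; rewrite !ffunE hm eqxx orbT.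
rewrite negb_or => /andP[h1 h2]; apply/ffunP => i; rewrite !ffunE.
case: ifP => // iA; case: (eqVneq i m1) => [e|_]; first by rewrite -e iA in h1.
by case: (eqVneq i m2) => [e|_] //; rewrite -e iA in h2.
Qed.

Lemma pp_ge0 x : 0 <= pp x.
Proof. by rewrite /pp; case: ifP => //; rewrite invr_ge0. Qed.

Lemma memS (P : outcome n -> Prop) (x : outcome n) : (x \in [set y : outcome n | P y]%classic) = `[< P x >].
Proof. by apply/idP/idP => [/set_mem/asboolT -> | /asboolP h]//; exact: mem_set. Qed.

Lemma marg_val A y : marg pp A y =
  (if y == x0 then 2^-1 else 0) + (if y == restr A x1 then 2^-1 else 0).
Proof.
rewrite /marg (@esum2 _ _ (fun x => (pp x)%:E) x0 x1 x01).
- rewrite !memS restr_x0.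
  have e1 : `[< x0 = y >] = (y == x0) by apply/asboolP/eqP => ->.
  have e2 : `[< restr A x1 = y >] = (y == restr A x1) by apply/asboolP/eqP => ->.
  rewrite e1 e2 /pp eqxx /= eqxx orbT.
  idtac.
  by case: ifP => _; case: ifP => _; rewrite ?addr0 ?add0r.

- by move=> x; rewrite lee_fin pp_ge0.
- by move=> x h1 h2; rewrite /pp (negbTE h1) (negbTE h2).
Qed.
End Dist.

Section Ent.
Variables (n : nat) (m1 m2 : 'I_n).
Local Notation pp := (pp m1 m2).
Local Notation x1 := (x1 m1 m2).
Local Notation hit := (hit m1 m2).

Lemma half_half : 2^-1 + 2^-1 = 1 :> RR.
Proof. by field. Qed.

Lemma ln_half : ln (2^-1 : RR) = - ln 2.
Proof. by rewrite lnV // posrE. Qed.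

Lemma entropy_val A : entropy pp A = (if hit A then ln 2 else 0)%:E.
Proof.
rewrite /entropy; have [hA|hA] := boolP (hit A); last first.
  rewrite esum1 // => y _; rewrite marg_val.
  move: hA; rewrite -restr_x1 => /eqP ->.
  case: ifP => _; last by rewrite addr0 mul0r oppr0.
  by rewrite half_half ln1 mulr0 oppr0.
have rx : x0 n != restr A x1 by rewrite eq_sym restr_x1 hA.
rewrite (@esum2 _ _ _ (x0 n) (restr A x1) rx).
- rewrite !in_setT !marg_val eqxx (negbTE rx) eq_sym (negbTE rx) eqxx addr0 add0r.
  by rewrite ln_half -EFinD; congr (_%:E); by field.
- move=> y; rewrite lee_fin marg_val.
  case: ifP => [/eqP ->|_]; first by rewrite (negbTE rx) addr0 ln_half; 
    rewrite mulrN opprK mulr_ge0 // ?invr_ge0 // ln_ge0 //; lra.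
  case: ifP => _; last by rewrite addr0 mul0r oppr0.
  by rewrite add0r ln_half mulrN opprK mulr_ge0 // ?invr_ge0 // ln_ge0 //; lra.
- move=> y h1 h2; rewrite marg_val (negbTE h1) (negbTE h2) addr0 mul0r oppr0 //.
Qed.
End Ent.

Section Nondeg.
Variable n : nat.

Lemma pp_adm (m1 m2 : 'I_n) : admissible (pp m1 m2).
Proof.
split; last by move=> i; rewrite entropy_val ltry.
split; first exact: pp_ge0.
rewrite (@esum2 _ _ _ (x0 n) (x1 m1 m2) (x01 m1 m2)).
- by rewrite !in_setT /pp eqxx (negbTE (x01 m1 m2)) eqxx orbT -EFinD half_half.
- by move=> x; rewrite lee_fin pp_ge0.
- by move=> x h1 h2; rewrite /pp (negbTE h1) (negbTE h2).
Qed.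

Lemma centropy_val (m1 m2 : 'I_n) (Q C : {set 'I_n}) : ~~ hit m1 m2 C ->
  centropy (pp m1 m2) Q C = if hit m1 m2 Q then ln 2 else 0.
Proof.
move=> hC; rewrite /centropy !entropy_val (negbTE hC) /= subr0.
have -> : hit m1 m2 (Q :|: C) = hit m1 m2 Q.
  by move: hC; rewrite /hit !inE; case: (m1 \in C); case: (m2 \in C); rewrite ?orbF.
by case: ifP.
Qed.

Lemma ln2_gt0 : 0 < ln (2 : RR).
Proof. by rewrite ln_gt0 // ltr1n. Qed.

Lemma arith_aux (s u l : RR) : 2 * l <= s -> u <= l -> 0 < l -> s - u = 0 -> False.
Proof. move=> *; lra. Qed.

Lemma nondeg (X : CMI n) : (2 <= size (pur X).2)%N -> ~ degenerate X.
Proof.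
case: X => C Qs; rewrite /pur /= size_map.
set P := (fun Q : {set 'I_n} => Q :\: C != set0).
case eF: (seq.filter P Qs) => [|Qa [|Qb rest]] //= _.
have: Qa \in seq.filter P Qs by rewrite eF inE eqxx.
rewrite mem_filter => /andP[/set0Pn [m1 hm1] _].
have: Qb \in seq.filter P Qs by rewrite eF !inE eqxx orbT.
rewrite mem_filter => /andP[/set0Pn [m2 hm2] _].
move: hm1 hm2; rewrite !inE => /andP[m1C m1Q] /andP[m2C m2Q].
have hC : ~~ hit m1 m2 C by rewrite /hit negb_or m1C m2C.
move=> /(_ _ (pp_adm m1 m2)); rewrite /valid /=.
under eq_bigr do rewrite centropy_val //.
rewrite centropy_val //.
set c := fun Q => if hit m1 m2 Q then ln (2:RR) else 0.
have c0 : forall Q, 0 <= c Q by move=> Q; rewrite /c; case: ifP => // _; exact: ltW ln2_gt0.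
have cU : c (\bigcup_(Q <- Qs) Q) <= ln 2 by rewrite /c; case: ifP => // _; exact: ltW ln2_gt0.
have cA : c Qa = ln 2 by rewrite /c /hit m1Q.
have cB : c Qb = ln 2 by rewrite /c /hit m2Q orbT.
have hs : 2 * ln 2 <= \sum_(Q <- Qs) c Q.
  rewrite (bigID P) /= -big_filter eF !big_cons cA cB.
  have s1 : 0 <= \sum_(j <- rest) c j by apply: sumr_ge0 => i _.
  have s2 : 0 <= \sum_(i <- Qs | ~~ P i) c i by apply: sumr_ge0 => i _.
  lra.
have := ln2_gt0.
rewrite -/(c (\bigcup_(Q <- Qs) Q)).
move: hs cU; set s := \sum_(Q <- Qs) c Q; set u := c _.
move=> hs cU l2 e; exact: (arith_aux hs cU l2 e).
Qed.
End Nondeg.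

Section Deg.
Variable n : nat.
Implicit Types (p : outcome n -> RR) (C Q A B : {set 'I_n}).

Lemma centropy_sub p Q C : Q \subset C -> centropy p Q C = 0.
Proof. by move=> h; rewrite /centropy (finset.setUidPr h) subrr. Qed.

Lemma centropy_U p A B C : A :|: C = B :|: C -> centropy p A C = centropy p B C.
Proof. by rewrite /centropy => ->. Qed.

Lemma bigU_filter C (Qs : seq {set 'I_n}) :
  (\bigcup_(Q <- Qs) Q) :|: C =
  (\bigcup_(Q <- [seq Q <- Qs | Q :\: C != set0]) Q) :|: C.
Proof.
elim: Qs => [|Q Qs IH] //=; rewrite big_cons.
case: ifP => hQ; first by rewrite big_cons -!finset.setUA IH.
move: hQ => /negbT; rewrite negbK finset.setD_eq0 => hQ.
by rewrite -finset.setUA IH finset.setUCA (finset.setUidPr hQ).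
Qed.

Lemma deg_of (X : CMI n) : (size (pur X).2 <= 1)%N -> degenerate X.
Proof.
case: X => C Qs; rewrite /pur /= size_map => hs p _; rewrite /valid /=.
rewrite (centropy_U _ (bigU_filter C Qs)).
rewrite (bigID (fun Q => Q :\: C != set0)) /= -big_filter.
rewrite [X in _ + X - _]big1 ?addr0; last first.
  by move=> Q; rewrite negbK finset.setD_eq0 => h; rewrite centropy_sub.
move: hs; case: [seq Q <- Qs | Q :\: C != set0] => [|Q [|]] //= _.
  by rewrite !big_nil centropy_sub ?finset.sub0set // subrr.
by rewrite !big_cons !big_nil finset.setU0 addr0 subrr.
Qed.

Lemma degE (X : CMI n) : degenerate X <-> (size (pur X).2 <= 1)%N.
Proof.
split; last exact: deg_of.
by move=> h; rewrite leqNgt; apply/negP => h2; exact: (nondeg h2 h).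
Qed.
End Deg.

End SemM.
Import SemM.

Module CombM.
Local Notation set0 := finset.set0.
Section Comb.
Variable n : nat.
Implicit Types (X : CMI n) (C Q A B I : {set 'I_n}) (Qs : seq {set 'I_n}).

Lemma disjP' A B : reflect (forall x, x \in A -> x \notin B) [disjoint A & B].
Proof.
rewrite disjoint_subset; apply: (iffP fintype.subsetP) => h x /h; by rewrite inE.
Qed.

Definition pureish X := all (fun Q => (Q != set0) && [disjoint Q & X.1]) X.2.

Lemma size_pur X : (size (pur X).2 <= size X.2)%N.
Proof. by rewrite /= size_map size_filter count_size. Qed.

Lemma pur_pureish X : pureish X -> pur X = X.
Proof.
case: X => C Qs; rewrite /pureish /pur /= => h; congr pair.
elim: Qs h => [|Q Qs IH] //= /andP[/andP[h1 h2] h3].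
rewrite !(finset.setDidPl h2) h1 /= IH //; congr cons; exact/finset.setDidPl.
Qed.

Lemma pureish_pur X : pureish (pur X).
Proof.
case: X => C Qs; rewrite /pureish /pur /=.
elim: Qs => [|Q Qs IH] //=; case: ifP => h //=; rewrite h IH /= andbT.
by apply/disjP' => x; rewrite inE => /andP[].
Qed.

Lemma mem_bigU Qs Q x : Q \in Qs -> x \in Q -> x \in \bigcup_(Q <- Qs) Q.
Proof.
elim: Qs => [|Q' Qs IH] //=; rewrite big_cons inE finset.in_setU => /orP[/eqP <- -> //|h xQ].
by rewrite IH ?orbT.
Qed.

Lemma bigU_mem Qs x : x \in \bigcup_(Q <- Qs) Q -> exists2 Q, Q \in Qs & x \in Q.
Proof.
elim: Qs => [|Q' Qs IH] //=; first by rewrite big_nil inE.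
rewrite big_cons finset.in_setU => /orP[h|/IH [Q hQ xQ]].
  by exists Q'; rewrite ?inE ?eqxx.
by exists Q; rewrite // inE hQ orbT.
Qed.

Lemma rep_sub Qs : rep Qs \subset \bigcup_(Q <- Qs) Q.
Proof.
rewrite /rep; case: ifP => _; last exact: finset.sub0set.
apply/fintype.subsetP => x; rewrite inE => hc.
have : has (fun Q => x \in Q) Qs by rewrite has_count; exact: leq_trans hc.
by case/hasP => Q hQ xQ; apply: mem_bigU hQ xQ.
Qed.

Lemma disj_bigU C Qs : all (fun Q => [disjoint Q & C]) Qs ->
  [disjoint \bigcup_(Q <- Qs) Q & C].
Proof.
move=> /allP h; apply/disjP' => x /bigU_mem [Q hQ xQ].
exact: (disjP' _ _ (h Q hQ)).
Qed.

Lemma Pseq_props I C Qs : all (fun Q => [disjoint Q & C]) Qs ->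
  all (fun P => (P != set0) && [disjoint P & C]) (Pseq I Qs).
Proof.
rewrite /Pseq; elim: Qs => [|Q Qs IH] //= /andP[h1 h2]; case: ifP => h /=; last exact: IH.
rewrite h IH // andbT; apply/disjP' => x; rewrite inE => /andP[_ xQ].
exact: (disjP' _ _ h1).
Qed.

Lemma Pseq0 Qs : all (fun P => P != set0) Qs ->
  [seq P :\: set0 | P <- Qs & P :\: set0 != set0] = Qs.
Proof.
elim: Qs => [|Q Qs IH] //= /andP[h1 h2]; by rewrite finset.setD0 h1 /= finset.setD0 IH.
Qed.

Lemma pureish_disj X : pureish X -> all (fun Q => [disjoint Q & X.1]) X.2.
Proof. by move=> /allP h; apply/allP => Q /h /andP[]. Qed.

Lemma pureish_nz X : pureish X -> all (fun Q => Q != set0) X.2.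
Proof. by move=> /allP h; apply/allP => Q /h /andP[]. Qed.

Lemma canP_props X : all (fun P => (P != set0) && [disjoint P & canC X]) (canP X).
Proof.
rewrite /canP; case: ifP => // _; apply: Pseq_props.
exact: pureish_disj (pureish_pur X).
Qed.

Lemma can_pureish X : pureish X -> (2 <= size X.2)%N ->
  pureish (can X) /\ (2 <= size (can X).2)%N.
Proof.
case: X => C Qs hp hs; rewrite /can /= leqNgt hs /=.
have hd := pureish_disj hp; have hz := pureish_nz hp.
have hI : [disjoint rep Qs & C] by apply: disjointWl (rep_sub Qs) (disj_bigU hd).
case: ifP => [/eqP ->|hI0].
  by rewrite /Pseq Pseq0.
have hPs := Pseq_props (rep Qs) hd.
case: ifP => hs2; first by rewrite /pureish /= hI0 hI.
split; last by [].
by rewrite /pureish /= hI0 hI /=.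
Qed.
End Comb.

End CombM.
Import CombM.

Local Notation set0 := finset.set0.
Theorem mainTheorem18 (n : nat) (K K' : CMI n) :
  degenerate K -> (subCMI K K' <-> degenerate K').
Proof.
move=> hK; split; last by left.
have hK1 := (degE K).1 hK.
have IK : canI K = set0 by rewrite /canI /rep ltnNge hK1.
have PK : (size (canP K) <= 1)%N.
  rewrite /canP; case: ifP => // _; rewrite /Pseq size_map size_filter.
  exact: leq_trans (count_size _ _) hK1.
case => [//|[[Hd Hsub]|[Hnd [HI [HP [HC1 [HC2 Hpair]]]]]]].
- apply/degE; rewrite leqNgt; apply/negP => h2; apply: (nondeg _ Hd).
  suff [hp hs] : pureish (RKK K K') /\ (2 <= size (RKK K K').2)%N.
    rewrite (pur_pureish hp); have [hp2 hs2] := can_pureish hp hs.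
    by rewrite (pur_pureish hp2).
  have hp' := pureish_pur K'.
  have hPP := canP_props K'.
  have hnz : all (fun P => P != set0) (canP K').
    by apply/allP => P /(allP hPP) /andP[].
  rewrite /RKK IK !finset.setD0 Pseq0 //.
  case: ifP => hD.
    have ecP : canP K' = (pur K').2.
      rewrite /canP /canI in hD *; rewrite (eqP hD) eqxx andbF /Pseq Pseq0 //.
      exact: pureish_nz.
    rewrite ecP leqNgt h2 /=; split => //.
  have hDd : [disjoint canI K' & canC K'].
    exact: disjointWl (rep_sub _) (disj_bigU (pureish_disj hp')).
  case: ifP => _; first by rewrite /pureish /= hD hDd.
  by rewrite /pureish /= hD hDd hPP.
- exfalso; case: (leqP (size (canP (RKK K K'))) 1) => hs.
    apply: Hnd; apply/degE.
    set Y := pur (RKK K K'); rewrite /can; case: ifP => [//|hY].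
    move: HI hs; rewrite /canI /canP -/Y => -> hs; rewrite eqxx.
    apply: leq_trans (size_pur _) _; rewrite /=.
    by move: hs; rewrite eqxx andbF.
  set Ps := canP (RKK K K') in hs Hpair.
  have hPP : all (fun P => (P != set0) && [disjoint P & canC (RKK K K')]) Ps
    by exact: canP_props.
  have /andP[/set0Pn [m1 h1] _] := allP hPP _ (mem_nth set0 (ltnW hs)).
  have /andP[/set0Pn [m2 h2] _] := allP hPP _ (mem_nth set0 hs).
  have [i1 [i2 [l1 l2 ne _ _]]] := Hpair 0%N 1%N m1 m2 (ltnW hs) hs (fun e => ltac:(discriminate)) h1 h2.
  move: (leq_trans l1 PK) (leq_trans l2 PK); rewrite !ltnS !leqn0 => /eqP e1 /eqP e2.
  by apply: ne; rewrite e1 e2.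
Qed.
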